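(* Let $k\ge2$ be an integer and $m,n\in\mathbb Z$. Then $L_k^{(m)}L_k^{(n)}=L_k^{(m+n)}L_k^{(0)}=L_k^{(n)}L_k^{(m)}$.
   Context: Fix an integer $k\ge2$. Let $Q_k$ be the $k\times k$ matrix whose first row is all ones, with $(Q_k)_{i+1,i}=1$ for $1\le i\le k-1$ and all other entries $0$, and for $r\in\mathbb Z$ let $Q_k^r$ denote its $r$-th power. The generalized Lucas sequence of order $k$, $(l_{k,n})_{n\in\mathbb Z}$, is the two-sided sequence satisfying $l_{k,n+k}=l_{k,n+k-1}+\dots+l_{k,n}$ for all $n\in\mathbb Z$ with initial values $l_{k,r}=\operatorname{trace}(Q_k^r)$ for $0\le r\le k-1$ (so $l_{k,0}=k$ and $l_{k,r}=2^r-1$ for $1\le r\le k-1$). For $n\in\mathbb Z$ the generalized Lucas matrix $L_k^{(n)}$ is the $k\times k$ matrix with entries $(L_k^{(n)})_{i,1}=l_{k,k+n-i}$ and $(L_k^{(n)})_{i,j}=\sum_{m=n-i+j-1}^{k+n-i-1} l_{k,m}$ for $2\le j\le k$, $1\le i\le k$. *)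

(* Defs.v *)
From mathcomp Require Import all_boot all_order all_algebra.
Set Implicit Arguments. Unset Strict Implicit. Unset Printing Implicit Defensive.
Import GRing.Theory Num.Theory.
Local Open Scope ring_scope.

(* Q_k : first row all ones, (Q_k)_{i+1,i} = 1 (1-indexed), 0 elsewhere.
   0-indexed: entry (i,j) is 1 iff i = 0, or i = j+1. *)
Definition Qk (k : nat) : 'M[int]_k :=
  \matrix_(i < k, j < k) (if (i == 0%N :> nat) then 1 else ((i : nat) == j.+1)%:R).

(* initial window (l_{k,0}, ..., l_{k,k-1}) with l_{k,r} = trace (Q_k^r) *)
Definition lwin0 (k : nat) : seq int := [seq \tr (Qk k ^+ r) | r <- iota 0 k].

(* a window w = (l_n, ..., l_{n+k-1}); forward shift gives (l_{n+1},...,l_{n+k}) *)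
Definition fstep (w : seq int) : seq int := rcons (behead w) (\sum_(x <- w) x).

(* backward shift gives (l_{n-1}, ..., l_{n+k-2}), using
   l_{n-1} = l_{n+k-1} - (l_n + ... + l_{n+k-2}) *)
Definition bstep (k : nat) (w : seq int) : seq int :=
  (last 0 w - \sum_(x <- take k.-1 w) x) :: take k.-1 w.

Definition lucas (k : nat) (n : int) : int :=
  match n with
  | Posz p => head 0 (iter p fstep (lwin0 k))
  | Negz p => head 0 (iter p.+1 (bstep k) (lwin0 k))   (* index -(p+1) *)
  end.

(* generalized Lucas matrix L_k^{(n)}, 0-indexed (i' = i-1, j' = j-1):
   column 0: l_{k+n-i'-1};
   column j' >= 1: sum_{m = n-i'+j'-1}^{k+n-i'-2} l_m  (k - j' terms). *)
Definition Lmat (k : nat) (n : int) : 'M[int]_k :=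
  \matrix_(i < k, j < k)
    if (j == 0%N :> nat) then lucas k (k%:Z + n - i%:Z - 1)
    else \sum_(t < k - j) lucas k (n - i%:Z + j%:Z - 1 + t%:Z).

(* Main.v *)
Require Import Defs.
From mathcomp Require Import all_boot all_order all_algebra.
From mathcomp Require Import zify ring.
Import GRing.Theory Num.Theory.
Local Open Scope ring_scope.

Definition win k (n:int) := match n with
  Posz p => iter p fstep (lwin0 k) | Negz p => iter p.+1 (bstep k) (lwin0 k) end.

Lemma lucas_win k n : lucas k n = head 0 (win k n).
Proof. by case: n. Qed.

Lemma size_fstep w : (0 < size w)%N -> size (fstep w) = size w.
Proof. by case: w => //= a w _; rewrite size_rcons. Qed.

Lemma size_bstep k w : (0 < k)%N -> size w = k -> size (bstep k w) = k.
Proof. move=> k0 sw; rewrite /= size_take sw; case: k k0 {sw} => //= k _. by rewrite ltnSn. Qed.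

Lemma fstep_bstep k w : (0 < k)%N -> size w = k -> fstep (bstep k w) = w.
Proof.
move=> k0 sw; rewrite /fstep /bstep /= big_cons subrK.
case/lastP: w sw => [|s x] sw; first by rewrite -sw in k0.
by rewrite last_rcons -sw size_rcons /= -[rcons s x]cats1 take_size_cat // cats1.
Qed.

Lemma size_win k n : (0 < k)%N -> size (win k n) = k.
Proof.
move=> k0; have s0 : size (lwin0 k) = k by rewrite size_map size_iota.
case: n => p /=.
  elim: p => //= p IH; by rewrite size_fstep IH.
elim: p => [|p IH]; first exact: size_bstep.
exact: size_bstep.
Qed.

Lemma fstep_win k n : (0 < k)%N -> fstep (win k n) = win k (n + 1).
Proof.
move=> k0; case: n => p.
  by rewrite /= addn1.
have s0 : size (lwin0 k) = k by rewrite size_map size_iota.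
case: p => [|p].
  by rewrite /= fstep_bstep.
have -> : Negz p.+1 + 1 = Negz p by rewrite !NegzE; lia.
rewrite [win k (Negz p.+1)]/= fstep_bstep //.
by have := size_win k (Negz p) k0.
Qed.

Lemma nth_win k n t : (0 < k)%N -> (t < k)%N -> nth 0 (win k n) t = lucas k (n + t%:Z).
Proof.
move=> k0; elim: t n => [|t IH] n tk; first by rewrite addr0 lucas_win; case: (win k n).
have sw := size_win k n k0.
have : nth 0 (win k n) t.+1 = nth 0 (fstep (win k n)) t.
  rewrite /fstep nth_rcons size_behead sw.
  have -> : (t < k.-1)%N by lia.
  by rewrite nth_behead.
move=> ->; rewrite fstep_win // IH; last by lia.
congr lucas; lia.
Qed.

Lemma lucas_rec k n : (0 < k)%N -> lucas k (n + k%:Z) = \sum_(t < k) lucas k (n + t%:Z).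
Proof.
move=> k0.
have -> : n + k%:Z = (n + 1) + (k.-1)%:Z by lia.
rewrite -nth_win; last by lia. rewrite // -fstep_win //.
rewrite /fstep nth_rcons size_behead size_win // ltnn eqxx.
rewrite (big_nth 0) size_win // big_mkord; apply: eq_bigr => i _.
  by rewrite nth_win // ltn_ord.
by [].
Qed.

Lemma LmatE k n (i j : 'I_k) : (0 < k)%N ->
  Lmat k n i j = \sum_(t < k - j) lucas k (n - i%:Z + j%:Z - 1 + t%:Z).
Proof.
move=> k0; rewrite mxE; case: eqP => // j0.
rewrite j0 subn0 -lucas_rec //; congr lucas; lia.
Qed.

Lemma QmulE k (A : 'M[int]_k.+1) i j :
  (Qk k.+1 *m A) i j = if (i:nat) == 0%N then \sum_r A r j else A (inord i.-1) j.
Proof.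
rewrite mxE; case: ifP => i0.
  by apply: eq_bigr => r _; rewrite mxE i0 mul1r.
have ik : (i.-1 < k.+1)%N by have := ltn_ord i; lia.
rewrite (bigD1 (inord i.-1)) //= big1 ?addr0.
  rewrite mxE i0 inordK //.
  have -> : (i : nat) == i.-1.+1 by apply/eqP; move/negbT: i0; lia.
  by rewrite mul1r.
move=> r rne; rewrite mxE i0.
case: eqP => [ir|]; last by rewrite mul0r.
by move/eqP: rne; case; apply/val_inj; rewrite /= inordK // ir.
Qed.

Lemma QL k n : Qk k.+1 *m Lmat k.+1 n = Lmat k.+1 (n + 1).
Proof.
have k0 : (0 < k.+1)%N by []. apply/matrixP => i j; rewrite QmulE !LmatE //; case: ifP => i0.
  under eq_bigr => r _ do rewrite LmatE //.
  rewrite exchange_big /=; apply: eq_bigr => t _.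
  have -> : n + 1 - i%:Z + j%:Z - 1 + t%:Z = (n + j%:Z + t%:Z - k.+1%:Z) + k.+1%:Z.
    by move/eqP: i0; lia.
  rewrite lucas_rec // (reindex_inj rev_ord_inj) /=; apply: eq_bigr => s _.
  congr lucas; have := ltn_ord s; lia.
have ik : (i.-1 < k.+1)%N by have := ltn_ord i; lia.
rewrite inordK //; apply: eq_bigr => t _; congr lucas.
move/negbT: i0; lia.
Qed.

Lemma LQ k n : Lmat k.+1 n *m Qk k.+1 = Lmat k.+1 (n + 1).
Proof.
apply/matrixP => i j; rewrite mxE big_ord_recl.
have -> : Lmat k.+1 n i ord0 = lucas k.+1 (k.+1%:Z + n - i%:Z - 1) by rewrite mxE.
rewrite [Qk _ _ _]mxE /= mulr1.
under eq_bigr => r _ do rewrite [Qk _ _ _]mxE lift0 eqSS /=.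
rewrite LmatE //.
case: (ltnP j k) => hj.
  rewrite (bigD1 (Ordinal hj)) //= eqxx mulr1 big1 ?addr0; last first.
    move=> r rne; case: eqP => [e|]; last by rewrite mulr0.
    by move/eqP: rne; case; apply/val_inj.
  rewrite LmatE //= /bump /= add1n subSS (subSn (ltnW hj)) big_ord_recr /= addrC; congr (_ + _); last first.
    apply: eq_bigr => t _; congr lucas; lia.
  congr lucas; lia.
rewrite big1; last first.
  move=> r _; case: eqP => [e|]; last by rewrite mulr0.
  by have := ltn_ord r; lia.
have -> : (k.+1 - j = 1)%N by have := ltn_ord j; lia.
rewrite big_ord1 addr0 /=; congr lucas. have := ltn_ord j; lia.
Qed.

Lemma Qcancel k (A B : 'M[int]_k.+1) : Qk k.+1 *m A = Qk k.+1 *m B -> A = B.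
Proof.
move=> e.
have h i j : (i < k)%N -> A (inord i) j = B (inord i) j.
  move=> ik; have := congr1 (fun M : 'M[int]_k.+1 => M (inord i.+1) j) e.
  by rewrite /= !QmulE inordK.
apply/matrixP => i j; case: (ltnP i k) => ik.
  by have := h i j ik; rewrite inord_val.
have := congr1 (fun M : 'M[int]_k.+1 => M ord0 j) e; rewrite /= !QmulE /= !big_ord_recr /=.
rewrite (eq_bigr (fun r : 'I_k => B (widen_ord (leqnSn k) r) j)); last first.
  move=> r _.
  have -> : widen_ord (leqnSn k) r = inord r by apply/val_inj; rewrite /= inordK //; have := ltn_ord r; lia.
  by rewrite h.
move/addrI.
have -> : i = ord_max by apply/val_inj; have := ltn_ord i; rewrite /=; lia.
by [].
Qed.

Lemma int_ind2 (P : int -> Prop) : P 0 -> (forall n, P n <-> P (n + 1)) -> forall n, P n.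
Proof.
move=> P0 HS; case => p.
  elim: p => // p IH; have := HS p; have -> : Posz p + 1 = Posz p.+1 by rewrite -addn1. by case => + _; apply.
elim: p => [|p IH]; first by apply/HS.
apply/HS; have -> : Negz p.+1 + 1 = Negz p by rewrite !NegzE; lia.
exact: IH.
Qed.

Theorem theorem5 (k : nat) (hk : (2 <= k)%N) (m n : int) :
  Lmat k m *m Lmat k n = Lmat k (m + n) *m Lmat k 0 /\
  Lmat k (m + n) *m Lmat k 0 = Lmat k n *m Lmat k m.
Proof.
case: k hk => // k _.
have QL0 : Qk k.+1 *m Lmat k.+1 0 = Lmat k.+1 0 *m Qk k.+1 by rewrite QL LQ.
have comm : forall n, Lmat k.+1 0 *m Lmat k.+1 n = Lmat k.+1 n *m Lmat k.+1 0.
  apply: int_ind2 => // p; rewrite -QL; split => H.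
    by rewrite mulmxA -QL0 -mulmxA H mulmxA.
  by apply: Qcancel; rewrite mulmxA QL0 -mulmxA H mulmxA.
have main : forall m n, Lmat k.+1 m *m Lmat k.+1 n = Lmat k.+1 (m + n) *m Lmat k.+1 0.
  move=> m0 n0; move: m0; apply: int_ind2; first by rewrite add0r comm.
  move=> p; have -> : p + 1 + n0 = (p + n0) + 1 by lia.
  rewrite -!QL -!mulmxA; split => H; first by rewrite H.
  exact: Qcancel.
refine (conj (main m n) _).
by rewrite (main n m) addrC.
Qed.
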